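(* The matching policies FCFM, LCFM, every random policy (in particular every strict priority policy and the uniform policy U), and Match the Longest (ML) are sub-additive: for all $z',z''\in\mathcal V^*$ and all $\varsigma',\varsigma''\in\mathcal S^*$ whose letters lie in the support of $\nu_\phi$, with $|\varsigma'|=|z'|$, $|\varsigma''|=|z''|$, $$|Q_\phi(z'z'',\varsigma'\varsigma'')|\le|Q_\phi(z',\varsigma')|+|Q_\phi(z'',\varsigma'')|.$$
   Context: $G=(\mathcal V,\mathcal E)$ is a finite connected simple graph, $u - v$ denotes adjacency, $\mathcal E(v)$ the set of neighbours of $v$. A list of preferences $\sigma=(\sigma(i))_{i\in\mathcal V}\in\mathcal S$ gives, for each class $i$, a linear ordering $\sigma(i)$ of $\mathcal E(i)$. Each policy $\phi$ comes with a probability $\nu_\phi$ on $\mathcal S$. The buffer is a word $w\in\mathbb W=\{w\in\mathcal V^*:|w|_i|w|_j=0 \text{ whenever } i - j\}$ of classes of waiting items in arrival order. For $v\in\mathcal V,\sigma\in\mathcal S$, $w\odot_\phi(v,\sigma)=wv$ if no letter of $w$ is adjacent to $v$; otherwise one letter of $w$ adjacent to $v$, chosen by $\phi$, is deleted. For $z=z_1\cdots z_k\in\mathcal V^*$, $\varsigma=\varsigma_1\cdots\varsigma_k\in\mathcal S^*$, $Q_\phi(z,\varsigma)=(\cdots(\emptyset\odot_\phi(z_1,\varsigma_1))\cdots)\odot_\phi(z_k,\varsigma_k)$. Policies: FCFM deletes the leftmost letter of $w$ adjacent to $v$; LCFM deletes the rightmost one. For the other policies the class $j$ of the match is chosen from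 the class detail $x=(|w|_i)_i$ and $\sigma$ among $\mathcal P(x,v)=\{j\in\mathcal E(v):x(j)>0\}$, and the leftmost letter $j$ of $w$ is deleted. Random policy: $j$ is the first element of $\mathcal P(x,v)$ in the order $\sigma(v)$, $\nu_\phi$ arbitrary; strict priority: $\nu_\phi$ a Dirac mass; uniform U: $\nu_\phi$ uniform on $\mathcal S$. ML: $\nu_\phi$ uniform on $\mathcal S$ and $j$ is the first element, in the order $\sigma(v)$, of the set of $j\in\mathcal E(v)$ maximizing $x(j)$ (among those with $x(j)>0$). *)

(* Defs.v *)
From mathcomp Require Import all_boot.
Set Implicit Arguments. Unset Strict Implicit. Unset Printing Implicit Defensive.

Section Matching.
Variables (T : finType) (e : rel T).

(* A list of preferences: for each class i, a sequence sigma i listing the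
   neighbours of i (a linear order on E(i)). *)
Definition prefs := {ffun T -> seq T}.

Definition is_pref (s : prefs) : Prop :=
  forall i : T, uniq (s i) /\ (forall j, (j \in s i) = e i j).

Definition simple_connected_graph : Prop :=
  symmetric e /\ irreflexive e /\ (forall x y : T, connect e x y).

Definition del_at (k : nat) (w : seq T) : seq T := take k w ++ drop k.+1 w.

Inductive policy := FCFM | LCFM | RandomPol | ML.

Definition detail (w : seq T) (j : T) : nat := count_mem j w.

Definition step_fcfm (w : seq T) (v : T) : seq T :=
  if has (e v) w then del_at (find (e v) w) w else rcons w v.

(* LCFM: delete rightmost letter adjacent to v, else append v *)
Definition step_lcfm (w : seq T) (v : T) : seq T :=
  if has (e v) w then del_at ((size w).-1 - find (e v) (rev w)) w
  else rcons w v.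

Definition step_random (w : seq T) (v : T) (s : prefs) : seq T :=
  match [seq j <- s v | e v j & 0 < detail w j] with
  | [::] => rcons w v
  | j :: _ => rem j w
  end.

Definition step_ml (w : seq T) (v : T) (s : prefs) : seq T :=
  let m := \max_(j <- s v | e v j) detail w j in
  match [seq j <- s v | [&& e v j, 0 < detail w j & detail w j == m]] with
  | [::] => rcons w v
  | j :: _ => rem j w
  end.

Definition step (phi : policy) (w : seq T) (v : T) (s : prefs) : seq T :=
  match phi with
  | FCFM => step_fcfm w v
  | LCFM => step_lcfm w v
  | RandomPol => step_random w v s
  | ML => step_ml w v s
  end.

Definition Q (phi : policy) (z : seq T) (ss : seq prefs) : seq T :=
  foldl (fun w p => step phi w p.1 p.2) [::] (zip z ss).

End Matching.

(* Main.v *)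
Require Import Defs.
From mathcomp Require Import all_boot zify.
Set Implicit Arguments. Unset Strict Implicit. Unset Printing Implicit Defensive.

Section Align.
Variable T : eqType.
Implicit Types (P : pred T).
Definition tri := (bool * bool * T)%type.
Definition px (al : seq tri) : seq T := [seq t.2 | t <- al & t.1.1].
Definition py (al : seq tri) : seq T := [seq t.2 | t <- al & t.1.2].
Definition cost (al : seq tri) := count (fun t : tri => ~~ (t.1.1 && t.1.2)) al.
Definition del_first P (s : seq T) := take (find P s) s ++ drop (find P s).+1 s.

Fixpoint delx P (al : seq tri) : seq tri :=
  match al with
  | [::] => [::]
  | t :: r => if t.1.1 && P t.2 then (if t.1.2 then (false, true, t.2) :: r else r)
              else t :: delx P r
  end.
Fixpoint dely P (al : seq tri) : seq tri :=
  match al with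
  | [::] => [::]
  | t :: r => if t.1.2 && P t.2 then (if t.1.1 then (true, false, t.2) :: r else r)
              else t :: dely P r
  end.

Lemma del_first_cons P a s :
  del_first P (a :: s) = if P a then s else a :: del_first P s.
Proof. by rewrite /del_first /=; case: (P a); rewrite ?drop0. Qed.

Lemma px_delx P al : px (delx P al) = del_first P (px al).
Proof.
elim: al => [|[[a b] c] r IH] //=.
rewrite /px /= in IH *; case: a => /=; rewrite ?del_first_cons; case: (P c) => //=;
  try (case: b => //=); by rewrite ?IH.
Qed.
Lemma py_delx P al : py (delx P al) = py al.
Proof.
elim: al => [|[[a b] c] r IH] //=.
rewrite /py /= in IH *; case: a; case: b; case: (P c) => //=; by rewrite ?IH.
Qed.
Lemma py_dely P al : py (dely P al) = del_first P (py al).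
Proof.
elim: al => [|[[a b] c] r IH] //=.
rewrite /py /= in IH *; case: b => /=; rewrite ?del_first_cons; case: (P c) => //=;
  try (case: a => //=); by rewrite ?IH.
Qed.
Lemma px_dely P al : px (dely P al) = px al.
Proof.
elim: al => [|[[a b] c] r IH] //=.
rewrite /px /= in IH *; case: a; case: b; case: (P c) => //=; by rewrite ?IH.
Qed.
Lemma has_px P al : has P (px al) = has (fun t : tri => t.1.1 && P t.2) al.
Proof. elim: al => [|[[a b] c] r IH] //=; rewrite /px /=; case: a => //=; by rewrite -IH. Qed.
Lemma has_py P al : has P (py al) = has (fun t : tri => t.1.2 && P t.2) al.
Proof. elim: al => [|[[a b] c] r IH] //=; rewrite /py /=; case: b => //=; by rewrite -IH. Qed.

Lemma cost_delx P al : cost (delx P al) <= (cost al).+1.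
Proof.
elim: al => [|[[a b] c] r IH] //=; rewrite /cost /=.
case: a; case: b; case: (P c) => //=; rewrite -/(cost _); lia.
Qed.
Lemma cost_dely P al : cost (dely P al) <= (cost al).+1.
Proof.
elim: al => [|[[a b] c] r IH] //=; rewrite /cost /=.
case: a; case: b; case: (P c) => //=; rewrite -/(cost _); lia.
Qed.
Lemma cost_delx_lt P al : has (fun t : tri => t.1.1 && P t.2) al ->
  ~~ has (fun t : tri => t.1.2 && P t.2) al -> (cost (delx P al)).+1 <= cost al.
Proof.
elim: al => [|[[a b] c] r IH] //=; rewrite /cost /=.
case: a; case: b; case: (P c) => //= H1 H2; rewrite -!/(cost _) //; try lia;
  have := IH H1 H2; lia.
Qed.
Lemma cost_dely_lt P al : has (fun t : tri => t.1.2 && P t.2) al ->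
  ~~ has (fun t : tri => t.1.1 && P t.2) al -> (cost (dely P al)).+1 <= cost al.
Proof.
elim: al => [|[[a b] c] r IH] //=; rewrite /cost /=.
case: a; case: b; case: (P c) => //= H1 H2; rewrite -!/(cost _) //; try lia;
  have := IH H1 H2; lia.
Qed.
Lemma cost_both P al : has (fun t : tri => t.1.1 && P t.2) al ->
  has (fun t : tri => t.1.2 && P t.2) al -> cost (dely P (delx P al)) <= cost al.
Proof.
elim: al => [|[[a b] c] r IH] //=; rewrite /cost /=.
case: a; case: b; case Pc: (P c) => //= H1 H2; rewrite -!/(cost _) //=;
  rewrite ?Pc /= ?H1 ?H2 /=; rewrite -!/(cost _);
  try (have := IH H1 H2; lia);
  try (have := cost_dely P r; lia); try (have := cost_delx P r; lia).
Qed.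

Lemma size_align al : size (px al) <= size (py al) + cost al.
Proof.
elim: al => [|[[a b] c] r IH] //=; rewrite /px /py /cost /=.
case: a; case: b => /=; rewrite -/(px _) -/(py _) -/(cost _); lia.
Qed.

Lemma px_rcons al t : px (rcons al t) = if t.1.1 then rcons (px al) t.2 else px al.
Proof. by rewrite /px filter_rcons; case: (t.1.1); rewrite ?map_rcons. Qed.
Lemma py_rcons al t : py (rcons al t) = if t.1.2 then rcons (py al) t.2 else py al.
Proof. by rewrite /py filter_rcons; case: (t.1.2); rewrite ?map_rcons. Qed.
Lemma cost_rcons al t : cost (rcons al t) = cost al + ~~ (t.1.1 && t.1.2).
Proof. by rewrite /cost -cats1 count_cat /= addn0. Qed.
Lemma px_rev al : px (rev al) = rev (px al).
Proof. by rewrite /px filter_rev map_rev. Qed.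
Lemma py_rev al : py (rev al) = rev (py al).
Proof. by rewrite /py filter_rev map_rev. Qed.
Lemma cost_rev al : cost (rev al) = cost al.
Proof. by rewrite /cost count_rev. Qed.

Lemma px_init (w : seq T) : px [seq (true, false, c) | c <- w] = w.
Proof. by elim: w => //= c w; rewrite /px /= => ->. Qed.
Lemma py_init (w : seq T) : py [seq (true, false, c) | c <- w] = [::].
Proof. by elim: w => //= c w; rewrite /py /=. Qed.
Lemma cost_init (w : seq T) : cost [seq (true, false, c) | c <- w] = size w.
Proof. by elim: w => //= c w; rewrite /cost /= => ->. Qed.
End Align.

Lemma fold_inv (A B : Type) (f : A -> B -> A) (I : A -> A -> Prop) l a b :
  (forall x y p, I x y -> I (f x p) (f y p)) -> I a b -> I (foldl f a l) (foldl f b l).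
Proof. move=> H; elim: l a b => //= p l IH a b Hab; exact: IH (H _ _ _ Hab). Qed.

Section Counts.
Variable T : finType.
Implicit Types (x y w : seq T).

Lemma del_at_lcfm P (w : seq T) : has P w ->
  Defs.del_at ((size w).-1 - find P (rev w)) w = rev (del_first P (rev w)).
Proof.
move=> hP; rewrite /Defs.del_at /del_first rev_cat rev_drop rev_take !size_rev !revK.
have : find P (rev w) < size w by rewrite -(size_rev w) -has_find has_rev.
move: (find P (rev w)) => f hf.
have -> : (size w).-1 - f = size w - f.+1 by lia.
by have -> : (size w - f.+1).+1 = size w - f by lia.
Qed.

Definition D x y := \sum_(i : T) ((detail x i - detail y i) + (detail y i - detail x i)).

Lemma sum_eq1 (a : T) : \sum_(i : T) (a == i) = 1.
Proof.
rewrite (bigD1 a) //= eqxx big1 // => i /negbTE; by rewrite eq_sym => ->.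
Qed.

Lemma sum_cnt w : \sum_(i : T) detail w i = size w.
Proof.
elim: w => [|a w IH]; first by rewrite big1.
rewrite /detail /=; under eq_bigr do rewrite -/(detail w _).
by rewrite big_split /= sum_eq1 IH.
Qed.

Lemma size_D x y : size x <= size y + D x y.
Proof.
rewrite -!sum_cnt /D -big_split /=; apply: leq_sum => i _; lia.
Qed.

Lemma D_nil w : D w [::] = size w.
Proof. rewrite /D -sum_cnt; apply: eq_bigr => i _ /=; rewrite /detail /=; lia. Qed.

Lemma sum_pw (g g' : T -> nat) a b :
  (forall i, g' i + (a == i) <= g i + (b == i)) -> \sum_i g' i <= \sum_i g i.
Proof.
move=> H; have : \sum_i (g' i + (a == i)) <= \sum_i (g i + (b == i)).
  by apply: leq_sum => i _.
by rewrite !big_split /= !sum_eq1 leq_add2r.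
Qed.

Definition app (o : option T) w v := if o is Some j then rem j w else rcons w v.

Lemma cnt_rem j w i : detail (rem j w) i = detail w i - ((0 < detail w j) && (j == i)).
Proof. by rewrite /detail count_rem -has_pred1 has_count. Qed.
Lemma cnt_rcons w v i : detail (rcons w v) i = detail w i + (v == i).
Proof. by rewrite /detail -cats1 count_cat /= addn0. Qed.

Definition cond x y (ox oy : option T) := match ox, oy with
 | Some j, Some k => 0 < detail x j /\ 0 < detail y k /\
     (j = k \/ detail y j < detail x j \/ detail x k < detail y k)
 | Some j, None => detail y j < detail x j
 | None, Some k => detail x k < detail y k
 | None, None => True end.

Lemma cstep x y v ox oy : cond x y ox oy -> D (app ox x v) (app oy y v) <= D x y.
Proof.
rewrite /D; case: ox => [j|]; case: oy => [k|] /=.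
- move=> [hx [hy [E|[h|h]]]].
  + subst k; apply: (sum_pw (a := j) (b := j)) => i; rewrite !cnt_rem ?hx ?hy /=.
    case: eqP => _ /=; lia.
  + apply: (sum_pw (a := j) (b := k)) => i; rewrite !cnt_rem ?hx ?hy /=.
    case: (eqVneq j i) => [E1|N1]; case: (eqVneq k i) => [E2|N2]; subst; rewrite ?eqxx ?(negbTE N1) ?(negbTE N2) /=; lia.
  + apply: (sum_pw (a := k) (b := j)) => i; rewrite !cnt_rem ?hx ?hy /=.
    case: (eqVneq j i) => [E1|N1]; case: (eqVneq k i) => [E2|N2]; subst; rewrite ?eqxx ?(negbTE N1) ?(negbTE N2) /=; lia.
- move=> h; have hx : 0 < detail x j by lia.
  apply: (sum_pw (a := j) (b := v)) => i; rewrite !cnt_rem cnt_rcons hx /=.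
  case: (eqVneq j i) => [E1|N1]; case: (eqVneq v i) => [E2|N2]; subst; rewrite ?eqxx ?(negbTE N1) ?(negbTE N2) /=; lia.
- move=> h; have hy : 0 < detail y k by lia.
  apply: (sum_pw (a := k) (b := v)) => i; rewrite !cnt_rem cnt_rcons hy /=.
  case: (eqVneq k i) => [E1|N1]; case: (eqVneq v i) => [E2|N2]; subst; rewrite ?eqxx ?(negbTE N1) ?(negbTE N2) /=; lia.
- move=> _; apply: (sum_pw (a := v) (b := v)) => i; rewrite !cnt_rcons; lia.
Qed.
End Counts.

Section Pol.
Variables (T : finType) (e : rel T).
Implicit Types (x y w : seq T).

Lemma head_filter (s : seq T) (p q : pred T) j k l1 l2 :
  filter p s = j :: l1 -> filter q s = k :: l2 -> p k -> q j -> j = k.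
Proof.
elim: s l1 l2 => //= a s IH l1 l2.
case pa: (p a); case qa: (q a) => /=.
- by case=> <- _; case=> <- _.
- by case=> <- _ _ _ /[dup] /negP + ?; rewrite qa.
- by move=> _ [<- _] pk; rewrite pa in pk.
- exact: IH.
Qed.

Lemma bigmax_att (r : seq T) (P : pred T) (F : T -> nat) :
  0 < \max_(i <- r | P i) F i ->
  exists2 i, i \in r & P i && (F i == \max_(i <- r | P i) F i).
Proof.
elim: r => [|a r IH]; first by rewrite big_nil.
rewrite (_ : \max_(i <- a :: r | P i) F i = if P a then maxn (F a) (\max_(i <- r | P i) F i) else \max_(i <- r | P i) F i); last by rewrite big_cons.
case: ifP => Pa; last first.
  by move/IH => [i ir Hi]; exists i; rewrite ?inE ?ir ?orbT.
move: IH; set M := (X in maxn (F a) X) => IH.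
case: (leqP M (F a)) => h.
  move=> _; exists a; first by rewrite inE eqxx.
  by rewrite Pa /=.
move=> /IH [i ir Hi]; exists i => //; by rewrite inE ir orbT.
Qed.

Definition prand x v (s : prefs T) := [seq j <- s v | e v j & 0 < detail x j].

Lemma step_random_app x v s : step_random e x v s = app (ohead (prand x v s)) x v.
Proof. by rewrite /step_random /prand; case: filter. Qed.

Lemma cond_random x y v s : cond x y (ohead (prand x v s)) (ohead (prand y v s)).
Proof.
rewrite /prand.
case Ex: [seq j <- s v | e v j & 0 < detail x j] => [|j l1];
case Ey: [seq j <- s v | e v j & 0 < detail y j] => [|k l2] //=.
- have : k \in [seq j <- s v | e v j & 0 < detail y j] by rewrite Ey inE eqxx.
  rewrite mem_filter => /andP [/andP [ek hk] ks].
  case: (posnP (detail x k)) => [->//|hxk].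
  have : k \in [seq j <- s v | e v j & 0 < detail x j] by rewrite mem_filter ek hxk.
  by rewrite Ex.
- have : j \in [seq j <- s v | e v j & 0 < detail x j] by rewrite Ex inE eqxx.
  rewrite mem_filter => /andP [/andP [ej hj] js].
  case: (posnP (detail y j)) => [->//|hyj].
  have : j \in [seq j <- s v | e v j & 0 < detail y j] by rewrite mem_filter ej hyj.
  by rewrite Ey.
- have : j \in [seq j <- s v | e v j & 0 < detail x j] by rewrite Ex inE eqxx.
  rewrite mem_filter => /andP [/andP [ej hj] js].
  have : k \in [seq j <- s v | e v j & 0 < detail y j] by rewrite Ey inE eqxx.
  rewrite mem_filter => /andP [/andP [ek hk] ks].
  do 2 split => //.
  case: (posnP (detail y j)) => [h0|hyj]; first by right; left; lia.
  case: (posnP (detail x k)) => [h0|hxk]; first by right; right; lia.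
  left; apply: (head_filter Ex Ey); apply/andP; split => //.
Qed.

Definition pml x v (s : prefs T) :=
  [seq j <- s v | [&& e v j, 0 < detail x j &
     detail x j == \max_(j <- s v | e v j) detail x j]].

Lemma step_ml_app x v s : step_ml e x v s = app (ohead (pml x v s)) x v.
Proof. by rewrite /step_ml /pml; case: filter. Qed.

Lemma ml_none x v s j : pml x v s = [::] -> j \in s v -> e v j -> detail x j = 0.
Proof.
move=> E js ej; case: (posnP (detail x j)) => // hj.
have := @leq_bigmax_seq _ (s v) (e v) (fun j => detail x j) j js ej.
move=> hm; have /bigmax_att [i iin /andP [ei /eqP hi]] : 0 < \max_(j <- s v | e v j) detail x j.
  exact: leq_trans hm.
have : i \in pml x v s by rewrite mem_filter iin ei hi eqxx (leq_trans hj hm).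
by rewrite E.
Qed.

Lemma cond_ml x y v s : cond x y (ohead (pml x v s)) (ohead (pml y v s)).
Proof.
case Ex: (pml x v s) => [|j l1]; case Ey: (pml y v s) => [|k l2] //=.
- have : k \in pml y v s by rewrite Ey inE eqxx.
  rewrite mem_filter => /andP [/and3P [ek hk _] ks].
  by rewrite (ml_none Ex ks ek).
- have : j \in pml x v s by rewrite Ex inE eqxx.
  rewrite mem_filter => /andP [/and3P [ej hj _] js].
  by rewrite (ml_none Ey js ej).
- have : j \in pml x v s by rewrite Ex inE eqxx.
  rewrite mem_filter => /andP [/and3P [ej hj /eqP mj] js].
  have : k \in pml y v s by rewrite Ey inE eqxx.
  rewrite mem_filter => /andP [/and3P [ek hk /eqP mk] ks].
  do 2 split => //.
  case: (ltnP (detail y j) (detail x j)) => h1; first by right; left.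
  case: (ltnP (detail x k) (detail y k)) => h2; first by right; right.
  left.
  have b1 : detail x k <= detail x j by rewrite mj; apply: leq_bigmax_seq.
  have b2 : detail y j <= detail y k by rewrite mk; apply: leq_bigmax_seq.
  apply: (head_filter Ex Ey); apply/and3P; split => //; rewrite -?mj -?mk; try (apply/eqP; lia); lia.
Qed.
End Pol.

Theorem mainTheorem6 (T : finType) (e : rel T)
  (Hgraph : simple_connected_graph e)
  (phi : policy) (supp : pred (prefs T))
  (Hsupp : forall s, supp s -> is_pref e s)
  (z1 z2 : seq T) (s1 s2 : seq (prefs T)) :
  all supp s1 -> all supp s2 ->
  size s1 = size z1 -> size s2 = size z2 ->
  size (Q e phi (z1 ++ z2) (s1 ++ s2))
    <= size (Q e phi z1 s1) + size (Q e phi z2 s2).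
Proof.
move=> _ _ h1 _; rewrite /Q zip_cat // foldl_cat.
set f := fun w p => _.
move: (foldl f [::] (zip z1 s1)) (zip z2 s2) => w l.
case: phi @f => f.
- pose I (x y : seq T) := exists al : seq (tri T), px al = x /\ py al = y /\ cost al <= size w.
  have : I (foldl f w l) (foldl f [::] l).
    apply: fold_inv; last by exists [seq (true, false, c) | c <- w];
      rewrite px_init py_init cost_init.
    move=> x y [v s] [al [<- [<- hc]]]; rewrite /f /= /step_fcfm !has_px !has_py.
    set P := e v.
    case hx: (has _ al); case hy: (has _ al).
    + exists (dely P (delx P al)); rewrite px_dely px_delx py_dely py_delx.
      by do 2 split => //; apply: leq_trans (cost_both hx hy) hc.
    + exists (rcons (delx P al) (false, true, v)).
      rewrite px_rcons py_rcons cost_rcons /= px_delx py_delx; do 2 split => //.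
      have := cost_delx_lt hx (negbT hy); lia.
    + exists (rcons (dely P al) (true, false, v)).
      rewrite px_rcons py_rcons cost_rcons /= px_dely py_dely; do 2 split => //.
      have := cost_dely_lt hy (negbT hx); lia.
    + exists (rcons al (true, true, v)).
      by rewrite px_rcons py_rcons cost_rcons /= addn0.
  by move=> [al [<- [<- hc]]]; apply: leq_trans (size_align al) _; rewrite addnC leq_add2r.
- pose I (x y : seq T) := exists al : seq (tri T), px al = x /\ py al = y /\ cost al <= size w.
  have : I (foldl f w l) (foldl f [::] l).
    apply: fold_inv; last by exists [seq (true, false, c) | c <- w];
      rewrite px_init py_init cost_init.
    move=> x y [v s] [al [<- [<- hc]]]; rewrite /f /= /step_lcfm.
    set P := e v.
    have hx' : has P (px al) = has (fun t : tri T => t.1.1 && P t.2) (rev al)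
      by rewrite -has_px px_rev has_rev.
    have hy' : has P (py al) = has (fun t : tri T => t.1.2 && P t.2) (rev al)
      by rewrite -has_py py_rev has_rev.
    rewrite hx' hy'; rewrite -cost_rev in hc.
    case hx: (has _ (rev al)); case hy: (has _ (rev al)).
    + rewrite !del_at_lcfm ?hx' ?hy' ?hx ?hy //.
      exists (rev (dely P (delx P (rev al)))).
      rewrite ?(px_rev, py_rev, px_delx, py_delx, px_dely, py_dely, revK, cost_rev).
      do 2 split => //; apply: leq_trans (cost_both hx hy) hc.
    + rewrite del_at_lcfm ?hx' ?hx //.
      exists (rcons (rev (delx P (rev al))) (false, true, v)).
      rewrite ?(px_rcons, py_rcons, cost_rcons) /=.
      rewrite ?(px_rev, py_rev, px_delx, py_delx, px_dely, py_dely, revK, cost_rev).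
      do 2 split => //; have := cost_delx_lt hx (negbT hy); lia.
    + rewrite del_at_lcfm ?hy' ?hy //.
      exists (rcons (rev (dely P (rev al))) (true, false, v)).
      rewrite ?(px_rcons, py_rcons, cost_rcons) /=.
      rewrite ?(px_rev, py_rev, px_delx, py_delx, px_dely, py_dely, revK, cost_rev).
      do 2 split => //; have := cost_dely_lt hy (negbT hx); lia.
    + exists (rcons al (true, true, v)).
      rewrite px_rcons py_rcons cost_rcons /= addn0 -cost_rev; by [].
  by move=> [al [<- [<- hc]]]; apply: leq_trans (size_align al) _; rewrite addnC leq_add2r.
- have : D (foldl f w l) (foldl f [::] l) <= size w.
    apply: (fold_inv (I := fun x y : seq T => D x y <= size w)); last by rewrite D_nil.
    move=> x y [v s] H; rewrite /f /= !step_random_app.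
    exact: leq_trans (cstep _ (cond_random e x y v s)) H.
  by move=> H; have := size_D (foldl f w l) (foldl f [::] l); lia.
- have : D (foldl f w l) (foldl f [::] l) <= size w.
    apply: (fold_inv (I := fun x y : seq T => D x y <= size w)); last by rewrite D_nil.
    move=> x y [v s] H; rewrite /f /= !step_ml_app.
    exact: leq_trans (cstep _ (cond_ml e x y v s)) H.
  by move=> H; have := size_D (foldl f w l) (foldl f [::] l); lia.
Qed.
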